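(* For every $a\in[\mathbb{F}_q^{\times}]$ (Teichmüller lifts) one has $f_a^{\mathrm{LT}}=1$. More generally, for every $a\in\mathcal{O}_K^{\times}$, \[ \big(f_a^{\mathrm{LT}}\big)^{-1}\in 1+c_aT_K^{q-1}-c_a^{p^{f-1}}T_K^{(q-1)(p^{f-1}+1)}+T_K^{(q-1)(2p^{f-1}+1)}\mathbb{F}_q[[T_K^{q-1}]], \] where $c_a\in\mathbb{F}_q$ is the reduction modulo $p$ of $(1-a^{q-1})/p\in\mathcal{O}_K$.
   Context: Let $p$ be an odd prime, $K$ the unramified extension of $\mathbb{Q}_p$ of degree $f\ge1$, with ring of integers $\mathcal{O}_K$ and residue field $\mathbb{F}_q$, $q=p^f$. Let $G_{\mathrm{LT}}$ be the Lubin–Tate formal $\mathcal{O}_K$-module over $\mathcal{O}_K$ attached to the uniformizer $p$, with formal variable $T_K$ chosen so that its logarithm is $\sum_{n\ge0}p^{-n}T_K^{q^n}$. For $a\in\mathcal{O}_K$ let $a_{\mathrm{LT}}(T_K)\in aT_K+T_K^2\mathcal{O}_K[[T_K]]$ be the endomorphism series of $G_{\mathrm{LT}}$ attached to $a$, and also denote by $a_{\mathrm{LT}}(T_K)\in\mathbb{F}_q[[T_K]]$ its reduction mod $p$. For $a\in\mathcal{O}_K^\times$ with reduction $\bar a\in\mathbb{F}_q^\times$, set $f_a^{\mathrm{LT}}:=\bar aT_K/a_{\mathrm{LT}}(T_K)\in 1+T_K\mathbb{F}_q[[T_K]]$. *)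

(* Defs.v *)
From HB Require Import structures.
From mathcomp Require Import all_boot all_order all_algebra.
Set Implicit Arguments.
Unset Strict Implicit.
Unset Printing Implicit Defensive.
Import Order.TTheory GRing.Theory Num.Theory.
Local Open Scope ring_scope.

(* The ring O_K.  We do not have p-adic numbers in the library, so O_K is  *)
(* taken as an abstract integral domain R satisfying the properties that   *)
(* characterize the ring of integers of the unramified extension of Q_p of *)
(* degree f (up to isomorphism, by Cohen's structure theorem this is       *)
(* W(F_q)): p <> 0, every non-unit is divisible by p (local ring with      *)
(* maximal ideal pR), R is p-adically separated and complete, and the      *)
(* residue field R/pR has exactly q = p^f elements.                        *)

Definition congp (R : nzRingType) (p : nat) (x y : R) : Prop :=
  exists z : R, x - y = p%:R * z.

Definition is_unramified_Zp_ext (R : idomainType) (p f : nat) : Prop :=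
  [/\ p%:R != 0 :> R,
      (forall x : R, x \is a GRing.unit \/ exists y : R, x = p%:R * y),
      (forall x : R, (forall n : nat, exists y : R, x = p%:R ^+ n * y) -> x = 0),
      (forall u : nat -> R,
          (forall n : nat, exists y : R, u n.+1 - u n = p%:R ^+ n * y) ->
          exists l : R, forall n : nat, exists y : R, l - u n = p%:R ^+ n * y) &
      (exists r : 'I_(p ^ f) -> R,
          (forall i j, congp p (r i) (r j) -> i = j) /\
          (forall x : R, exists i, congp p x (r i)))].

Definition ps_one (R : nzRingType) : nat -> R := fun k => (k == 0%N)%:R.

Definition ps_mul (R : nzRingType) (s t : nat -> R) : nat -> R :=
  fun k => \sum_(i < k.+1) s i * t (k - i)%N.

Definition ps_pow (R : nzRingType) (s : nat -> R) (n : nat) : nat -> R :=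
  iter n (ps_mul s) (ps_one R).

Fixpoint ps_inv_seq (R : unitRingType) (s : nat -> R) (n : nat) : seq R :=
  match n with
  | 0%N => [:: (s 0%N)^-1]
  | n'.+1 =>
      let b := ps_inv_seq s n' in
      rcons b (- (s 0%N)^-1 * \sum_(j < n'.+1) s j.+1 * nth 0 b (n' - j)%N)
  end.

Definition ps_inv (R : unitRingType) (s : nat -> R) : nat -> R :=
  fun n => nth 0 (ps_inv_seq s n) n.

(* Lubin-Tate formal O_K-module with logarithm  sum_n p^-n T^(q^n).        *)

Definition LTlog_coef (F : unitRingType) (p f k : nat) : F :=
  \sum_(n < k.+1) (if k == ((p ^ f) ^ n)%N then (p%:R : F) ^- n else 0).

(* phi is the endomorphism series a_LT(T) in O_K[[T]] of G_LT attached to a: *)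
(* phi in aT + T^2 O_K[[T]] and log(phi(T)) = a log(T) in K[[T]].  Since      *)
(* phi(0) = 0, the coefficient of T^k in log(phi(T)) = sum_n p^-n phi^(q^n)  *)
(* only involves n <= k.                                                     *)
Definition is_LT_endo (R : idomainType) (p f : nat) (a : R) (phi : nat -> R)
  : Prop :=
  [/\ phi 0%N = 0, phi 1%N = a &
      forall k : nat,
        \sum_(n < k.+1)
           ((p%:R : {fraction R}) ^- n) *
           FracField.tofrac (ps_pow phi ((p ^ f) ^ n)%N k)
        = FracField.tofrac a * LTlog_coef {fraction R} p f k].

(* Coefficients of  a_LT(T) / (a T)  in O_K[[T]]; its reduction mod p is   *)
(* (f_a^LT)^-1 = a_LT(T) / (abar T).                                         *)
Definition fLT_inv (R : unitRingType) (a : R) (phi : nat -> R) : nat -> R :=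
  fun k => a^-1 * phi k.+1.

(* Coefficients of  a T / a_LT(T)  in O_K[[T]]; its reduction mod p is     *)
(* f_a^LT = abar T / a_LT(T).                                                *)
Definition fLT (R : unitRingType) (a : R) (phi : nat -> R) : nat -> R :=
  ps_inv (fLT_inv a phi).

Definition LT_expected (R : nzRingType) (p f : nat) (c : R) (k : nat) : R :=
  if k == 0%N then 1
  else if k == (p ^ f).-1 then c
  else if k == ((p ^ f).-1 * (p ^ f.-1 + 1))%N then - c ^+ (p ^ f.-1)
  else 0.

Definition LT_shape (R : nzRingType) (p f : nat) (c : R) (g : nat -> R) : Prop :=
  forall k : nat,
    ((k < (p ^ f).-1 * (2 * p ^ f.-1 + 1))%N -> congp p (g k) (LT_expected p f c k))
    /\ (((p ^ f).-1 * (2 * p ^ f.-1 + 1) <= k)%N -> ~~ ((p ^ f).-1 %| k)%N ->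
        congp p (g k) 0).

(* Main.v *)
Require Import Defs.
From HB Require Import structures.
From mathcomp Require Import all_boot all_order all_algebra.
From mathcomp Require Import zify ring.
Import GRing.Theory.
Local Open Scope ring_scope.

Lemma ppS (R : nzRingType) (s : nat -> R) m k :
  ps_pow s m.+1 k = \sum_(i < k.+1) s i * ps_pow s m (k - i)%N.
Proof. by []. Qed.

Lemma pp0 (R : nzRingType) (s : nat -> R) k : ps_pow s 0 k = (k == 0%N)%:R.
Proof. by []. Qed.

Lemma pp1 (R : nzRingType) (s : nat -> R) k : ps_pow s 1 k = s k.
Proof.
rewrite ppS big_ord_recr /= subnn /ps_one eqxx mulr1 big1 ?add0r // => i _.
have -> : (k - i == 0)%N = false by apply/negbTE; rewrite subn_eq0 -ltnNge.
by rewrite mulr0.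
Qed.

Lemma pp_at0 (R : nzRingType) (s : nat -> R) m :
  s 0%N = 0 -> (0 < m)%N -> ps_pow s m 0 = 0.
Proof. by case: m => // m s0 _; rewrite ppS big_ord1 s0 mul0r. Qed.

Lemma pp_small (R : nzRingType) (s : nat -> R) m k :
  s 0%N = 0 -> (k < m)%N -> ps_pow s m k = 0.
Proof.
move=> s0; elim: m k => // m IH k km; rewrite ppS big1 // => [[i /= ik]] _.
case: i ik => [|i] ik; first by rewrite s0 mul0r.
by rewrite IH ?mulr0 //; lia.
Qed.

Lemma pp_poly (R : nzRingType) (s : nat -> R) (P : {poly R}) K :
  (forall j, (j <= K)%N -> P`_j = s j) ->
  forall m, (P ^+ m)`_K = ps_pow s m K.
Proof.
move=> HP m; elim: m K HP => [|m IH] K HP; first by rewrite expr0 coef1.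
rewrite exprS coefM ppS; apply: eq_bigr => [[i /= iK]] _.
rewrite HP; last by lia.
by rewrite IH // => j jK; apply: HP; lia.
Qed.

Lemma pp_agree_lt (R : nzRingType) (s t : nat -> R) K :
  (forall j, (j < K)%N -> s j = t j) ->
  forall m j, (j < K)%N -> ps_pow s m j = ps_pow t m j.
Proof.
move=> Hst m j jK.
rewrite -(pp_poly _ s (\poly_(i < K) s i) j) -?(pp_poly _ t (\poly_(i < K) s i) j) //.
  by move=> i ij; rewrite coef_poly ifT; [apply: Hst|]; lia.
by move=> i ij; rewrite coef_poly ifT //; lia.
Qed.

Lemma pp_agree (R : nzRingType) (s t : nat -> R) K :
  s 0%N = 0 -> t 0%N = 0 -> (forall j, (j < K)%N -> s j = t j) ->
  forall m, (2 <= m)%N -> ps_pow s m K = ps_pow t m K.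
Proof.
move=> s0 t0 Hst [|[|m]] // _; rewrite !ppS; apply: eq_bigr => [[i iK]] _.
rewrite [nat_of_ord _]/=.
case: i iK => [|i] iK; first by rewrite s0 t0 !mul0r.
case: (ltngtP i.+1 K) => [lt|gt|eq].
- by rewrite Hst // (pp_agree_lt _ _ _ _ Hst) //; lia.
- lia.
- by rewrite eq subnn !pp_at0 ?mulr0.
Qed.

Lemma pp_support (R : nzRingType) (Q : nat) (s : nat -> R) :
  (forall j, (j %% Q != 1)%N -> s j = 0) ->
  forall m K, (K %% Q != m %% Q)%N -> ps_pow s m K = 0.
Proof.
move=> Hs; elim=> [|m IH] K HK.
  rewrite pp0; case: K HK => //; by rewrite mod0n eqxx.
rewrite ppS big1 // => [[i /= iK]] _.
have [/eqP si|si] := boolP (i %% Q == 1)%N; last by rewrite Hs ?mul0r.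
rewrite IH ?mulr0 //; apply: contra HK => /eqP e.
have -> : K = (i + (K - i))%N by lia.
by rewrite -modnDm si e modnDmr add1n.
Qed.

Lemma ps_inv_one (R : unitRingType) (s : nat -> R) :
  s 0%N = 1 -> (forall j, s j.+1 = 0) -> forall n, ps_inv s n = (n == 0%N)%:R.
Proof.
move=> s0 sS n.
have E : forall n, ps_inv_seq s n = 1 :: nseq n 0.
  elim=> [|m IH] /=; first by rewrite s0 invr1.
  rewrite IH big1 ?mulr0; last by move=> j _; rewrite sS mul0r.
  by rewrite /=; congr cons; elim: (m) => //= m' ->.
rewrite /ps_inv E; case: n => //= n; by case: n.+1 => // ; elim: n => //.
Qed.

Arguments ps_pow : simpl never.
Arguments LTlog_coef : simpl never.

Lemma pp_X (R : comNzRingType) (a : R) m k :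
  ps_pow (fun j => if j == 1%N then a else 0) m k = if k == m then a ^+ m else 0.
Proof.
rewrite -(pp_poly _ _ (a *: 'X) k); last first.
  by move=> j _; rewrite coefZ coefX; case: (j == 1%N); rewrite ?mulr1 ?mulr0.
by rewrite exprZn coefZ coefXn; case: (k == m); rewrite ?mulr1 ?mulr0.
Qed.

Lemma qn_ge2 p f n : prime p -> (0 < f)%N -> (0 < n)%N -> (2 <= (p ^ f) ^ n)%N.
Proof.
move=> pp f0 n0; have p2 := prime_gt1 pp.
have h1 : (2 <= p ^ f)%N.
  case: f f0 => // f' _; rewrite expnS; have : (0 < p ^ f')%N by rewrite expn_gt0 prime_gt0.
  nia.
case: n n0 => // n _; rewrite expnS; have : (0 < (p ^ f) ^ n)%N by rewrite !expn_gt0 prime_gt0.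
nia.
Qed.

Lemma endo_split (p f : nat) (R : idomainType) (a : R) phi k :
  is_LT_endo p f a phi ->
  FracField.tofrac (phi k) + \sum_(n < k) ((p%:R : {fraction R}) ^- n.+1 *
      FracField.tofrac (ps_pow phi ((p ^ f) ^ n.+1) k)) =
  FracField.tofrac a * ((k == 1%N)%:R +
      \sum_(n < k) (if k == ((p ^ f) ^ n.+1)%N then (p%:R : {fraction R}) ^- n.+1 else 0)).
Proof.
case=> _ _ E; have := E k; rewrite /LTlog_coef.
rewrite [X in X = _ -> _]big_ord_recl [X in _ = _ * X -> _]big_ord_recl /=.
rewrite /bump !expn0 expr0 invr1 mul1r pp1.
by case: (k == 1%N).
Qed.

Lemma teich_phi (p f : nat) (R : idomainType) (a : R) phi :
  prime p -> (0 < f)%N -> a ^+ (p ^ f).-1 = 1 -> is_LT_endo p f a phi ->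
  forall k, phi k = if k == 1%N then a else 0.
Proof.
move=> pp f0 aQ HE; case: (HE) => phi0 phi1 E.
set q := (p ^ f)%N in aQ *.
have q2 : (2 <= q)%N by have := qn_ge2 p f 1 pp f0 isT; rewrite expn1.
have aq : forall n, a ^+ (q ^ n) = a.
  have aq1 : a ^+ q = a by rewrite -(prednK (ltnW q2)) exprS aQ mulr1.
  by elim=> [|n IH]; rewrite ?expr1 // expnSr exprM IH aq1.
elim/ltn_ind=> k IH.
case: k IH => [|[|k]] IH; rewrite ?phi0 ?phi1 //=.
have := endo_split _ _ _ _ _ k.+2 HE.
set S1 := (X in _ + X = _); set S2 := (X in _ * (_ + X)).
have -> : S1 = FracField.tofrac a * S2.
  rewrite /S1 /S2 mulr_sumr; apply: eq_bigr => [[n nk]] _ /=.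
  rewrite (pp_agree _ _ (fun j => if j == 1%N then a else 0) k.+2 phi0) //;
    last by apply: qn_ge2.
  rewrite pp_X aq; case: ifP => _; first by rewrite mulrC.
  by rewrite rmorph0 !mulr0.
rewrite /= mulr0n add0r => /(canRL (addrK _)); rewrite subrr => /eqP.
by rewrite -tofrac0 tofrac_eq => /eqP.
Qed.


Lemma qn_mod (q n : nat) : (2 < q)%N -> ((q ^ n) %% q.-1 = 1)%N.
Proof.
move=> q3; have h : (q %% q.-1 = 1)%N.
  rewrite -{1}(prednK (ltnW (ltnW q3))) -addn1 -modnDml modnn add0n modn_small //; lia.
by rewrite -modnXm h exp1n modn_small //; lia.
Qed.

Lemma qpow (q n : nat) : (0 < q)%N -> (0 < n)%N -> (q <= q ^ n)%N.
Proof. by move=> q0 n0; rewrite -{1}(expn1 q) leq_pexp2l. Qed.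

Lemma phi_support (p f : nat) (R : idomainType) (a : R) phi :
  (2 < p ^ f)%N -> is_LT_endo p f a phi ->
  forall k, (k %% (p ^ f).-1 != 1)%N -> phi k = 0.
Proof.
move=> q3 HE; case: (HE) => phi0 phi1 _.
elim/ltn_ind=> k IH Hk.
case: k IH Hk => [|k] IH Hk; first by [].
have := endo_split _ _ _ _ _ k.+1 HE.
rewrite big1; last first.
  move=> [n nk] _ /=.
  set s' := fun j => if (j < k.+1)%N then phi j else 0.
  rewrite (pp_agree _ _ s' k.+1 phi0) //; last 2 first.
  - by move=> j jk; rewrite /s' jk.
  - by apply: leq_trans (qpow _ _ _ _); lia.
  rewrite (pp_support _ (p ^ f).-1) ?rmorph0 ?mulr0 //.
    by move=> j jn; rewrite /s'; case: ifP => // jk; apply: IH.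
  by rewrite qn_mod.
have k1 : (k.+1 == 1%N) = false.
  by apply/negbTE; apply: contra Hk => /eqP ->; rewrite modn_small //; lia.
rewrite k1 mulr0n add0r big1 ?mulr0 ?addr0.
  by move/eqP; rewrite tofrac_eq => /eqP.
move=> [n nk] _ /=; case: eqP => // e; move: Hk; rewrite e qn_mod //.
Qed.

Lemma endo_R (p f : nat) (R : idomainType) (a : R) phi :
  (2 < p ^ f)%N -> p%:R != 0 :> R -> is_LT_endo p f a phi ->
  forall k, (0 < k)%N -> (k < (p ^ f) ^ 2)%N ->
  p%:R * phi k + ps_pow phi (p ^ f) k =
  a * (p%:R * (k == 1%N)%:R + (k == (p ^ f)%N)%:R).
Proof.
move=> q3 p0 HE; case: (HE) => phi0 _ _ [//|k] _ kq.
have := endo_split _ _ _ _ _ k.+1 HE.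
rewrite big_ord_recl [X in _ = _ * (_ + X) -> _]big_ord_recl /=.
rewrite big1; last first.
  move=> [n nk] _ /=; rewrite pp_small ?rmorph0 ?mulr0 //.
  apply: leq_trans kq _; rewrite /bump /= leq_exp2l ?add1n //; lia.
rewrite big1; last first.
  move=> [n nk] _ /=; case: eqP => // e; move: kq; rewrite e.
  by rewrite /bump /= ltn_exp2l ?add1n //; lia.
rewrite !addr0 expn1 => H.
have pF0 : (p%:R : {fraction R}) != 0.
  by rewrite -tofrac1 -tofracMn tofrac_eq0.
apply/eqP; rewrite -tofrac_eq; apply/eqP.
rewrite !(rmorphD, rmorphM, rmorph_nat).
set X := FracField.tofrac (phi k.+1) in H *.
set Y := FracField.tofrac (ps_pow phi (p ^ f) k.+1) in H *.
rewrite (_ : _ * X + Y = p%:R * (X + (p%:R)^-1 * Y)); last by field.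
rewrite H; case: (k.+1 == (p ^ f)%N); rewrite /= ?mulr1n ?mulr0n; by field.
Qed.


Lemma bin_pval p e i : prime p -> (0 < i)%N ->
  (p ^ (e - logn p i) %| 'C(p ^ e, i))%N.
Proof.
move=> pp i0.
have [m cpm Ei] := pfactor_coprime pp i0.
set v := logn p i in Ei *.
have H : (p ^ e * 'C((p ^ e).-1, i.-1) = i * 'C(p ^ e, i))%N.
  by rewrite mul_bin_diag prednK.
case: (leqP e v) => ev.
  by move: ev; rewrite -subn_eq0 => /eqP ->; rewrite expn0 dvd1n.
have : (p ^ (e - v) * p ^ v %| 'C(p ^ e, i) * m * p ^ v)%N.
  rewrite -expnD subnK ?(ltnW ev) // -mulnA -Ei mulnC -H.
  exact: dvdn_mulr.
rewrite dvdn_pmul2r ?expn_gt0 ?prime_gt0 // Gauss_dvdl //.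
by rewrite coprimeXl.
Qed.

Lemma logn_lt p e i : prime p -> (0 < i)%N -> (i < p ^ e)%N -> (logn p i < e)%N.
Proof.
move=> pp i0 ie; rewrite ltnNge; apply/negP => le.
have : (p ^ e %| i)%N by rewrite pfactor_dvdn.
move/(dvdn_leq i0); lia.
Qed.

Lemma bin_p1 p e i : prime p -> (0 < i)%N -> (i < p ^ e)%N -> (p %| 'C(p ^ e, i))%N.
Proof.
move=> pp i0 ie; apply: dvdn_trans (bin_pval _ e _ pp i0).
have := logn_lt _ _ _ pp i0 ie => h.
by rewrite -{1}(expn1 p) dvdn_exp2l //; lia.
Qed.

Lemma bin_p2 p f i : prime p -> (0 < f)%N -> (0 < i)%N -> (i < 2 * p ^ f.-1)%N ->
  i != (p ^ f.-1)%N -> (p ^ 2 %| 'C(p ^ f, i))%N.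
Proof.
move=> pp f0 i0 i2 iN; apply: dvdn_trans (bin_pval _ f _ pp i0).
apply: dvdn_exp2l; rewrite leqNgt; apply/negP => lt.
have : (p ^ f.-1 %| i)%N by rewrite pfactor_dvdn //; lia.
case/dvdnP => k Ek; move: iN i2 i0; rewrite Ek.
have N0 : (0 < p ^ f.-1)%N by rewrite expn_gt0 prime_gt0.
case: k {Ek} => [|[|k]] //; first by rewrite mul1n eqxx.
move=> _; nia.
Qed.

Lemma bin_pN p f : prime p -> (0 < f)%N ->
  'C(p ^ f, p ^ f.-1) = (p * 'C((p ^ f).-1, (p ^ f.-1).-1))%N.
Proof.
move=> pp f0.
have N0 : (0 < p ^ f.-1)%N by rewrite expn_gt0 prime_gt0.
have := mul_bin_diag (p ^ f) (p ^ f.-1).-1.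
rewrite prednK // -{1}(prednK f0) expnS -mulnA => /eqP.
by rewrite mulnCA eqn_pmul2l // => /eqP <-.
Qed.

Lemma bin_qm1 (R : comNzRingType) p f j : prime p -> (0 < f)%N -> (j < p ^ f)%N ->
  exists t : R, ('C((p ^ f).-1, j))%:R = (-1) ^+ j + p%:R * t.
Proof.
move=> pp f0; elim: j => [|j IH] jq.
  by exists 0; rewrite bin0 expr0 mulr0 addr0.
have [t Ht] := IH (ltnW jq).
have [d Hd] : exists d, 'C(p ^ f, j.+1) = (d * p)%N.
  by apply/dvdnP; apply: bin_p1 => //.
exists (d%:R - t).
have q0 : (0 < p ^ f)%N by rewrite expn_gt0 prime_gt0.
have := binS (p ^ f).-1 j; rewrite prednK // Hd => /(congr1 (fun n => n%:R : R)).
rewrite natrD natrM => E.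
have -> : ('C((p ^ f).-1, j.+1))%:R = d%:R * p%:R - ('C((p ^ f).-1, j))%:R :> R.
  by rewrite E addrK.
rewrite Ht exprS; ring.
Qed.


Lemma sum_delta (R : nzRingType) n j (x : R) : (j < n)%N ->
  \sum_(i < n) (if (i : nat) == j then x else 0) = x.
Proof.
move=> jn; rewrite (bigD1 (Ordinal jn)) //= eqxx big1 ?addr0 // => i ne.
rewrite ifF //; apply/negbTE; apply: contra ne => /eqP e; apply/eqP/val_inj.
by rewrite /= e.
Qed.

Lemma sum_mod (R : comNzRingType) (d : R) n (F T : nat -> R) :
  (forall i, (i < n)%N -> exists z, F i = T i + d * z) ->
  exists z, \sum_(i < n) F i = \sum_(i < n) T i + d * z.
Proof.
elim: n => [|n IH] H; first by exists 0; rewrite !big_ord0 mulr0 addr0.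
have [z1 H1] := IH (fun i iN => H i (ltnW iN)).
have [z2 H2] := H n (ltnSn n).
exists (z1 + z2); rewrite !big_ord_recr /= H1 H2; ring.
Qed.

Lemma pow_mod (R : comNzRingType) (d x y : R) n :
  (exists z, x = y + d * z) -> exists w, x ^+ n = y ^+ n + d * w.
Proof.
case=> z ->; elim: n => [|n [w IH]]; first by exists 0; rewrite !expr0 mulr0 addr0.
exists (z * y ^+ n + y * w + d * z * w); rewrite !exprS IH; ring.
Qed.

Lemma coef_vanish (R : nzRingType) (P : {poly R}) d :
  (forall j, (j < d)%N -> P`_j = 0) ->
  forall i j, (j < i * d)%N -> (P ^+ i)`_j = 0.
Proof.
move=> HP; elim=> [|i IH] j jd; first by [].
rewrite exprS coefM big1 // => [[l /= lj]] _.
case: (ltnP l d) => ld; first by rewrite HP ?mul0r.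
by rewrite IH ?mulr0 //; rewrite mulSn in jd; lia.
Qed.


Lemma core (R : idomainType) (p f : nat) (a c : R) (phi : nat -> R) :
  prime p -> odd p -> (0 < f)%N -> p%:R != 0 :> R -> a \is a GRing.unit ->
  p%:R * c = 1 - a ^+ (p ^ f).-1 ->
  phi 0%N = 0 -> phi 1%N = a ->
  (forall k, (k %% (p ^ f).-1 != 1)%N -> phi k = 0) ->
  (forall k, (0 < k)%N -> (k < (p ^ f) ^ 2)%N ->
     p%:R * phi k + ps_pow phi (p ^ f) k =
     a * (p%:R * (k == 1%N)%:R + (k == (p ^ f)%N)%:R)) ->
  forall m, (m < 2 * p ^ f.-1)%N ->
  exists z, a^-1 * phi ((p ^ f).-1 * m.+1).+1 =
    c * (m == 0%N)%:R - (m == p ^ f.-1)%N%:R * c ^+ (p ^ f.-1) + p%:R * z.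
Proof.
move=> pp podd f0 p0 aU Hc phi0 phi1 Hsupp Heq.
have p3 : (2 < p)%N by move: podd (prime_gt1 pp); case: (p) => [|[|[|]]].
set q := (p ^ f)%N in Hc Hsupp Heq *.
set N := (p ^ f.-1)%N.
have N0 : (0 < N)%N by rewrite expn_gt0 prime_gt0.
have qN : q = (p * N)%N by rewrite /q /N -expnS prednK.
set Q := q.-1 in Hc Hsupp Heq *.
have qQ : q = Q.+1 by rewrite /Q prednK // qN; nia.
have Q2 : (2 <= Q)%N by nia.
set u := a ^+ Q in Hc *.
set h := fun j => a^-1 * phi j.+1.
have phih : forall j, phi j.+1 = a * h j by move=> j; rewrite /h mulVKr.
have h0 : h 0%N = 1 by rewrite /h phi1 mulVr.
have hsupp : forall j, ~~ (Q %| j)%N -> h j = 0.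
  move=> j nd; rewrite /h Hsupp ?mulr0 //; apply: contra nd => /eqP e.
  rewrite /dvdn; have := eqn_modDr 1 j 0 Q; rewrite add0n addn1 e mod0n.
  by rewrite [(1 %% Q)%N]modn_small // eqxx => /esym.
set M := (q ^ 2)%N.
set Hp := \poly_(j < M) h j.
set G := Hp - 1.
have GE : forall j, (0 < j < M)%N -> G`_j = h j.
  move=> j /andP [j0 jM]; rewrite coefB coef_poly jM coef1.
  by case: j j0 {jM} => // j _; rewrite subr0.
have Glow : forall j, (j < Q)%N -> G`_j = 0.
  move=> [|j] jQ.
    by rewrite coefB coef_poly coef1 ifT ?h0 ?subrr // /M expn_gt0 qQ.
  rewrite GE; last by apply/andP; split => //; rewrite /M qQ; nia.
  by apply: hsupp; apply/negP => /(dvdn_leq (ltn0Sn j)); lia.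
have bound : forall m, (m < 2 * N)%N -> ((Q * m.+1).+1 < M)%N.
  move=> m mN; rewrite /M -mulnn.
  have h1 : (Q * m.+1 <= Q * (2 * N))%N by rewrite leq_mul2l mN orbT.
  have h2 : (q * (3 * N) <= q * q)%N by rewrite leq_mul2l qN leq_mul2r; lia.
  rewrite qQ in h2 *; nia.
have eqK : forall m, (m < 2 * N)%N ->
    p%:R * h (Q * m.+1)%N + u * (Hp ^+ q)`_(Q * m) = (m == 0%N)%:R.
  move=> m mN; have := Heq (Q * m.+1).+1 isT (bound m mN).
  rewrite phih.
  rewrite -(pp_poly _ phi (a *: ('X * Hp)) _); last first.
    move=> [|j] jK; first by rewrite coefZ coefXM /= mulr0.
    rewrite coefZ coefXM /= coef_poly ifT ?phih //.
    by have := bound m mN; lia.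
  rewrite exprZn exprMn coefZ coefXnM ifF; last by rewrite qQ; nia.
  have -> : ((Q * m.+1).+1 - q = Q * m)%N by rewrite qQ; lia.
  have -> : ((Q * m.+1).+1 == 1%N) = false by rewrite eqSS muln_eq0; lia.
  have -> : ((Q * m.+1).+1 == q) = (m == 0%N).
    by rewrite qQ eqSS -{2}(muln1 Q) eqn_pmul2l ?eqSS //; lia.
  rewrite qQ exprS => E; apply: (mulrI aU).
  rewrite (_ : a * _ = p%:R * (a * h (Q * m.+1)%N) + a * a ^+ Q * (Hp ^+ Q.+1)`_(Q * m));
    last by rewrite /u; ring.
  by rewrite E mulr0n mulr0 add0r.
set C' := 'C(q.-1, N.-1).
have Sexp : forall m, (m < 2 * N)%N -> exists z,
    (Hp ^+ q)`_(Q * m) = (m == 0%N)%:R + p%:R * (C'%:R * (G ^+ N)`_(Q * m)) + p%:R ^+ 2 * z.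
  move=> m mN.
  have -> : Hp = G + 1 by rewrite /G subrK.
  rewrite exprD1n coef_sum.
  set g := (G ^+ N)`_(Q * m).
  pose F := fun i => (G ^+ i *+ 'C(q, i))`_(Q * m).
  pose T := fun i => if i == 0%N then (m == 0%N)%:R else if i == N then p%:R * (C'%:R * g) else 0.
  have HT : forall i, (i < q.+1)%N -> exists z, F i = T i + p%:R ^+ 2 * z.
    move=> i iq; rewrite /F /T coefMn.
    case: i iq => [|i] iq.
      exists 0; rewrite expr0 coef1 bin0 mulr1n mulr0 addr0 muln_eq0.
      by rewrite (_ : (Q == 0%N) = false) //; lia.
    rewrite /=; case: eqP => [eN|nN].
      exists 0; rewrite eN /q bin_pN // -/q -/N -/C' -/g -[X in X = _]mulr_natr natrM; ring.
    case: (ltnP m i.+1) => mi.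
      exists 0; rewrite (coef_vanish _ _ Q Glow) ?mul0rn ?mulr0 ?addr0 //; last by nia.
    have : (p ^ 2 %| 'C(p ^ f, i.+1))%N.
      by apply: bin_p2 => //; [lia | apply/eqP].
    case/dvdnP => k Ek; exists ((G ^+ i.+1)`_(Q * m) * k%:R).
    by rewrite -/q Ek -[X in X = _]mulr_natr natrM natrX add0r; ring.
  have [z Hz] := sum_mod _ _ _ _ _ HT.
  exists z; rewrite [LHS]Hz big_ord_recl /= /bump /=.
  rewrite (eq_bigr (fun i : 'I_q => if (i : nat) == N.-1 then p%:R * (C'%:R * g) else 0)).
    by rewrite sum_delta; [rewrite /T eqxx | lia].
  move=> i _; rewrite /T add1n -{1}(prednK N0) eqSS /=.
  by case: (i == N.-1 :> nat).
set hQ := h Q.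
set G2 := G - hQ *: 'X^Q.
have G2low : forall j, (j < 2 * Q)%N -> G2`_j = 0.
  move=> j jQ; rewrite /G2 coefB coefZ coefXn.
  case: (ltngtP j Q) => [lt|gt|->].
  - by rewrite Glow // mulr0 subr0.
  - rewrite GE; last by apply/andP; split; [lia | rewrite /M qQ; nia].
    rewrite hsupp ?mulr0 ?subr0 //; apply/negP => /dvdnP [k Ek].
    move: gt jQ; rewrite Ek; case: (k) => [|[|k']]; rewrite ?mul0n ?mul1n ?mulSn; lia.
  - by rewrite GE ?eqxx ?mulr1 ?subrr //; apply/andP; split; [lia | rewrite /M qQ; nia].
have Gpow : forall m, (m < 2 * N)%N -> exists w,
    (G ^+ N)`_(Q * m) = hQ ^+ N * (m == N)%:R + p%:R * w.
  move=> m mN.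
  have -> : G = hQ *: 'X^Q + G2 by rewrite /G2 addrC subrK.
  rewrite exprDn coef_sum.
  pose F := fun i => ((hQ *: 'X^Q) ^+ (N - i) * G2 ^+ i *+ 'C(N, i))`_(Q * m).
  pose T := fun i => if i == 0%N then hQ ^+ N * (m == N)%:R else 0.
  have HT : forall i, (i < N.+1)%N -> exists z, F i = T i + p%:R * z.
    move=> i iN; rewrite /F /T coefMn.
    case: i iN => [|i] iN.
      exists 0; rewrite subn0 expr0 mulr1 bin0 mulr1n mulr0 addr0.
      rewrite exprZn coefZ -exprM coefXn eqn_pmul2l //; lia.
    case: (ltngtP i.+1 N) => [lt|gt|eN].
    - have : (p %| 'C(p ^ f.-1, i.+1))%N by apply: bin_p1.
      case/dvdnP => k Ek; exists (((hQ *: 'X^Q) ^+ (N - i.+1) * G2 ^+ i.+1)`_(Q * m) * k%:R).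
      by rewrite -/N Ek -[X in X = _]mulr_natr natrM /= add0r; ring.
    - lia.
    - exists 0; rewrite eN subnn expr0 mul1r (coef_vanish _ _ (2 * Q) G2low) ?mul0rn ?mulr0 ?addr0 //=.
        by rewrite ifF //; apply/negbTE; rewrite -lt0n.
      nia.
  have [z Hz] := sum_mod _ _ _ _ _ HT.
  exists z; rewrite [LHS]Hz big_ord_recl /= big1 ?addr0 //.
have uE : u = 1 - p%:R * c by rewrite Hc; ring.
have NNq : (N.-1 < p ^ f)%N by rewrite -/q qN; nia.
have [t Ht] := bin_qm1 R p f N.-1 pp f0 NNq.
have oN : odd N by rewrite /N oddX podd orbT.
have sN : (-1) ^+ N.-1 = 1 :> R.
  rewrite -signr_odd; move: oN; rewrite -(prednK N0) /= => /negbTE ->.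
  by rewrite expr0.
rewrite sN in Ht.
have stepA : forall m, (m < 2 * N)%N -> exists z1,
    h (Q * m.+1)%N = c * (m == 0%N)%:R - (G ^+ N)`_(Q * m) + p%:R * z1.
  move=> m mN; have [z Hz] := Sexp m mN.
  set g := (G ^+ N)`_(Q * m) in Hz *.
  exists (- ((t - c - p%:R * c * t) * g + u * z)).
  apply: (mulfI p0).
  have E := eqK m mN; rewrite Hz in E.
  rewrite (_ : p%:R * h (Q * m.+1)%N = (m == 0%N)%:R - u * ((m == 0%N)%:R
     + p%:R * (C'%:R * g) + p%:R ^+ 2 * z)); last exact: (canRL (addrK _) E).
  rewrite /C' Ht uE; ring.
have [z0 Hz0] : exists z0, hQ = c + p%:R * z0.
  have [z1 Hz1] := stepA 0%N ltac:(lia).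
  exists z1; rewrite /hQ -{1}(muln1 Q) Hz1 (coef_vanish _ _ Q Glow) //; last by nia.
  by rewrite eqxx mulr1 subr0.
have [w' Hw'] := pow_mod R (p%:R) hQ c N (ex_intro _ z0 Hz0).
move=> m mN.
have [z1 Hz1] := stepA m mN.
have [w Hw] := Gpow m mN.
exists (z1 - w - w' * (m == N)%:R).
rewrite -/(h _) Hz1 Hw Hw'; ring.
Qed.


Lemma modS (Q k : nat) : (2 <= Q)%N -> ~~ (Q %| k)%N -> (k.+1 %% Q != 1)%N.
Proof.
move=> Q2 nd; apply: contra nd => /eqP e.
rewrite /dvdn; have := eqn_modDr 1 k 0 Q; rewrite add0n addn1 e mod0n.
by rewrite [(1 %% Q)%N]modn_small // eqxx => /esym.
Qed.

Theorem lemma2p1 (p f : nat) (R : idomainType) :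
  prime p -> odd p -> (0 < f)%N -> is_unramified_Zp_ext R p f ->
  (forall a : R, a ^+ (p ^ f).-1 = 1 ->
     forall phi : nat -> R, is_LT_endo p f a phi ->
     forall k : nat, congp p (fLT a phi k) (k == 0%N)%:R)
  /\
  (forall a : R, a \is a GRing.unit ->
     forall phi : nat -> R, is_LT_endo p f a phi ->
     forall c : R, p%:R * c = 1 - a ^+ (p ^ f).-1 ->
     LT_shape p f c (fLT_inv a phi)).
Proof.
move=> pp podd f0 [p0 _ _ _ _].
have p3 : (2 < p)%N by move: podd (prime_gt1 pp); case: (p) => [|[|[|]]].
have N0 : (0 < p ^ f.-1)%N by rewrite expn_gt0 prime_gt0.
have qN : (p ^ f = p * p ^ f.-1)%N by rewrite -expnS prednK.
have q3 : (2 < p ^ f)%N by rewrite qN; nia.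
have Q2 : (2 <= (p ^ f).-1)%N by lia.
split.
  move=> a aQ phi HE k.
  have aU : a \is a GRing.unit.
    by rewrite -(unitrX_pos a (_ : 0 < (p ^ f).-1)%N) ?aQ ?unitr1 //; lia.
  have Hphi := teich_phi p f R a phi pp f0 aQ HE.
  exists 0; rewrite /fLT ps_inv_one ?subrr ?mulr0 //.
    by rewrite /fLT_inv Hphi /= mulVr.
  by move=> j; rewrite /fLT_inv Hphi /= mulr0.
move=> a aU phi HE c Hc; case: (HE) => phi0 phi1 _.
have Hsupp := phi_support p f R a phi q3 HE.
have Heq := endo_R p f R a phi q3 p0 HE.
have Hcore := core R p f a c phi pp podd f0 p0 aU Hc phi0 phi1 Hsupp Heq.
move=> k; split.
  move=> kb.
  have [/dvdnP [j Ej]|nd] := boolP ((p ^ f).-1 %| k)%N; last first.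
    exists 0; rewrite /fLT_inv Hsupp ?modS // mulr0 mulr0 /LT_expected.
    rewrite ifF; last by apply/negbTE; apply: contra nd => /eqP ->.
    rewrite ifF; last by apply/negbTE; apply: contra nd => /eqP ->.
    rewrite ifF ?subrr //; apply/negbTE; apply: contra nd => /eqP ->.
    exact: dvdn_mulr.
  rewrite Ej in kb *; case: j {Ej} kb => [|m] kb.
    by exists 0; rewrite mul0n /fLT_inv /LT_expected /= phi1 mulVr // subrr mulr0.
  have mN : (m < 2 * p ^ f.-1)%N by move: kb; rewrite mulnC ltn_mul2l => /andP [_]; lia.
  have [z Hz] := Hcore m mN.
  exists z; rewrite /fLT_inv mulnC Hz /LT_expected.
  rewrite ifF; last by apply/negbTE; rewrite muln_eq0; lia.
  case: (m =P 0%N) => [->|m0].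
    rewrite muln1 eqxx (_ : (0 == p ^ f.-1)%N = false); last by apply/negbTE; lia.
    by rewrite /=; ring.
  rewrite ifF; last by apply/negbTE; rewrite -{2}(muln1 (p ^ f).-1) eqn_pmul2l; lia.
  case: (m =P p ^ f.-1)%N => [->|mN'].
    by rewrite addn1 eqxx /=; ring.
  rewrite ifF; last by apply/negbTE; rewrite eqn_pmul2l; lia.
  by rewrite /=; ring.
move=> kb nd; exists 0; rewrite /fLT_inv Hsupp ?modS // mulr0 mulr0 subrr //.
Qed.
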